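(* Let $K$ be a compact subset of $M$ and let $U$ be a relatively open subset of $M$ with $K\subset U$. Then there is a compact set $K'$ with $K\subset K'\subset U$ such that $K'$ satisfies the bi-Lipschitz cone condition.
   Context: $\Omega\subset\mathbb{R}^n$ is a bounded, connected open set which, near each boundary point, is equivalent to a half space via a bi-Lipschitz map; $M=\bar\Omega$. Bi-Lipschitz cone condition for compact $K\subset M$: there are $r,\varepsilon>0$ such that for each $x_0\in\partial K$ there is $F:B_r(x_0)\to\mathbb{R}^n$, $F(x_0)=0$, $\varepsilon|x-y|\le|F(x)-F(y)|\le\varepsilon^{-1}|x-y|$, with $F(K\cap B_r(x_0))\supset\{(x_1,x')\in\mathbb{R}\times\mathbb{R}^{n-1}:|x'|<\varepsilon x_1<\varepsilon^2\}$. *)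

(* Defs.v *)
From Stdlib Require Import Reals List.
From Stdlib Require Vectors.Fin.
Open Scope R_scope.

Definition Rn (n : nat) : Type := Fin.t n -> R.

Fixpoint sumF (n : nat) : (Fin.t n -> R) -> R :=
  match n return (Fin.t n -> R) -> R with
  | O => fun _ => 0
  | S m => fun f => f Fin.F1 + sumF m (fun i => f (Fin.FS i))
  end.

Definition enorm {n : nat} (x : Rn n) : R := sqrt (sumF n (fun i => x i ^ 2)).
Definition edist {n : nat} (x y : Rn n) : R := enorm (fun i => x i - y i).

Definition ball {n : nat} (x : Rn n) (r : R) : Rn n -> Prop :=
  fun y => edist x y < r.

Definition is_open {n : nat} (A : Rn n -> Prop) : Prop :=
  forall x, A x -> exists r, 0 < r /\ forall y, ball x r y -> A y.

Definition rn_bounded {n : nat} (A : Rn n -> Prop) : Prop :=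
  exists C, forall x, A x -> enorm x <= C.

Definition rn_connected {n : nat} (A : Rn n -> Prop) : Prop :=
  forall V W : Rn n -> Prop, is_open V -> is_open W ->
    (forall x, A x -> V x \/ W x) ->
    (forall x, A x -> V x -> W x -> False) ->
    (forall x, A x -> V x) \/ (forall x, A x -> W x).

Definition rn_closure {n : nat} (A : Rn n -> Prop) : Rn n -> Prop :=
  fun x => forall r, 0 < r -> exists y, A y /\ edist x y < r.

Definition rn_boundary {n : nat} (A : Rn n -> Prop) : Rn n -> Prop :=
  fun x => rn_closure A x /\ rn_closure (fun y => ~ A y) x.

Definition rn_compact {n : nat} (K : Rn n -> Prop) : Prop :=
  forall (I : Type) (V : I -> Rn n -> Prop),
    (forall i, is_open (V i)) ->
    (forall x, K x -> exists i, V i x) ->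
    exists l : list I, forall x, K x -> exists i, In i l /\ V i x.

Definition rel_open {n : nat} (M U : Rn n -> Prop) : Prop :=
  exists V, is_open V /\ forall x, U x <-> (V x /\ M x).

Definition rn_subset {n : nat} (A B : Rn n -> Prop) : Prop := forall x, A x -> B x.

Definition bilip_on {n : nat} (eps : R) (F : Rn n -> Rn n) (D : Rn n -> Prop) : Prop :=
  forall x y, D x -> D y ->
    eps * edist x y <= edist (F x) (F y) /\ edist (F x) (F y) <= / eps * edist x y.

Definition origin {n : nat} : Rn n := fun _ => 0.

Definition bilip_halfspace_domain {m : nat} (Omega : Rn (S m) -> Prop) : Prop :=
  forall p, rn_boundary Omega p ->
    exists r L (Phi : Rn (S m) -> Rn (S m)),
      0 < r /\ 0 < L /\
      (forall i, Phi p i = 0) /\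
      bilip_on L Phi (ball p r) /\
      is_open (fun z => exists y, ball p r y /\ forall i, Phi y i = z i) /\
      (forall y, ball p r y -> (Omega y <-> 0 < Phi y Fin.F1)).

Definition cone {m : nat} (eps : R) : Rn (S m) -> Prop :=
  fun z => enorm (fun i : Fin.t m => z (Fin.FS i)) < eps * z Fin.F1 /\
           eps * z Fin.F1 < eps ^ 2.

Definition bilip_cone_condition {m : nat} (K : Rn (S m) -> Prop) : Prop :=
  exists r eps, 0 < r /\ 0 < eps /\
    forall x0, rn_boundary K x0 ->
      exists F : Rn (S m) -> Rn (S m),
        (forall i, F x0 i = 0) /\
        bilip_on eps F (ball x0 r) /\
        forall z, cone eps z ->
          exists y, K y /\ ball x0 r y /\ forall i, F y i = z i.

(* Main.v *)
Require Import Defs.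
From Stdlib Require Import Reals List Lra Psatz Rtopology.
From Stdlib Require Vectors.Fin.
From Stdlib Require Import FunctionalExtensionality ClassicalEpsilon Classical.
Open Scope R_scope.

Definition rtl {n : nat} (x : Rn (S n)) : Rn n := fun i => x (Fin.FS i).

Lemma sumF_ext n (f g : Fin.t n -> R) : (forall i, f i = g i) -> sumF n f = sumF n g.
Proof. revert f g; induction n; intros f g H; simpl; auto. rewrite H, (IHn _ (fun i => g (Fin.FS i))); auto. Qed.

Lemma sumF_le n (f g : Fin.t n -> R) : (forall i, f i <= g i) -> sumF n f <= sumF n g.
Proof. revert f g; induction n; intros f g H; simpl. lra.
  pose proof (H Fin.F1). pose proof (IHn (fun i => f (Fin.FS i)) (fun i => g (Fin.FS i)) (fun i => H _)). lra. Qed.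

Lemma sumF_const n c : sumF n (fun _ => c) = INR n * c.
Proof. induction n; simpl sumF. simpl; ring. rewrite IHn, S_INR; ring. Qed.

Lemma sumF_nonneg n (f : Fin.t n -> R) : (forall i, 0 <= f i) -> 0 <= sumF n f.
Proof. intros H. assert (E : sumF n (fun _ => 0) = 0) by (rewrite sumF_const; ring).
  rewrite <- E. apply sumF_le; auto. Qed.

Lemma sumF_scale n c (f : Fin.t n -> R) : sumF n (fun i => c * f i) = c * sumF n f.
Proof. revert f; induction n; intros f; simpl. ring. rewrite IHn; ring. Qed.

Lemma enorm_nonneg n (x : Rn n) : 0 <= enorm x.
Proof. apply sqrt_pos. Qed.

Lemma sq_nonneg_sum n (x : Rn n) : 0 <= sumF n (fun i => x i ^ 2).
Proof. apply sumF_nonneg; intros; nra. Qed.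

Lemma enorm_S n (x : Rn (S n)) : enorm x = sqrt (x Fin.F1 ^ 2 + enorm (rtl x) ^ 2).
Proof. unfold enorm at 1. simpl sumF. f_equal. unfold enorm. rewrite pow2_sqrt; [reflexivity|].
  apply sq_nonneg_sum. Qed.

Lemma enorm_ext n (x y : Rn n) : (forall i, x i = y i) -> enorm x = enorm y.
Proof. intros H; unfold enorm; f_equal; apply sumF_ext; intros; rewrite H; auto. Qed.

Lemma enorm_0 n : enorm (fun _ : Fin.t n => 0) = 0.
Proof. unfold enorm. rewrite (sumF_ext _ _ (fun _ => 0)). rewrite sumF_const. rewrite Rmult_0_r; apply sqrt_0.
  intros; ring. Qed.

Lemma coord_le n (x : Rn n) i : Rabs (x i) <= enorm x.
Proof. revert x; induction i; intros x.
  - rewrite enorm_S. rewrite <- sqrt_Rsqr_abs. apply sqrt_le_1_alt. unfold Rsqr.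
    pose proof (pow2_ge_0 (enorm (rtl x))). nra.
  - rewrite enorm_S. specialize (IHi (rtl x)). unfold rtl in IHi at 1.
    eapply Rle_trans; [apply IHi|]. rewrite <- (sqrt_pow2 (enorm (rtl x))) at 1 by apply enorm_nonneg.
    apply sqrt_le_1_alt. pose proof (pow2_ge_0 (x Fin.F1)). lra. Qed.

Lemma sqrt2_le a b : sqrt (a ^ 2 + b ^ 2) <= Rabs a + Rabs b.
Proof. rewrite <- (sqrt_pow2 (Rabs a + Rabs b)) by (pose proof (Rabs_pos a); pose proof (Rabs_pos b); lra).
  apply sqrt_le_1_alt. rewrite <- (pow2_abs a), <- (pow2_abs b) at 1. pose proof (Rabs_pos a); pose proof (Rabs_pos b). nra. Qed.

Lemma enorm_le_sum n (x : Rn n) : enorm x <= sumF n (fun i => Rabs (x i)).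
Proof. induction n.
  - unfold enorm; simpl. rewrite sqrt_0; lra.
  - rewrite enorm_S. simpl sumF. specialize (IHn (rtl x)). unfold rtl in IHn.
    eapply Rle_trans; [apply sqrt2_le|]. rewrite (Rabs_right (enorm (rtl x))) by (apply Rle_ge, enorm_nonneg). unfold rtl. lra. Qed.

Lemma minkowski2 a b c1 c2 : 0 <= c1 -> 0 <= c2 ->
  sqrt ((a + b) ^ 2 + (c1 + c2) ^ 2) <= sqrt (a ^ 2 + c1 ^ 2) + sqrt (b ^ 2 + c2 ^ 2).
Proof. intros H1 H2.
  set (p := sqrt (a ^ 2 + c1 ^ 2)). set (q := sqrt (b ^ 2 + c2 ^ 2)).
  assert (Hp : 0 <= p) by apply sqrt_pos. assert (Hq : 0 <= q) by apply sqrt_pos.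
  assert (Hp2 : p * p = a ^ 2 + c1 ^ 2) by (apply sqrt_sqrt; nra).
  assert (Hq2 : q * q = b ^ 2 + c2 ^ 2) by (apply sqrt_sqrt; nra).
  rewrite <- (sqrt_pow2 (p + q)) by lra. apply sqrt_le_1_alt.
  assert (a * b + c1 * c2 <= p * q).
  { destruct (Rle_dec (a*b + c1*c2) 0). nra.
    apply Rsqr_incr_0_var. unfold Rsqr. replace (p*q*(p*q)) with ((p*p)*(q*q)) by ring.
    rewrite Hp2, Hq2. pose proof (pow2_ge_0 (a*c2 - b*c1)). nra. nra. }
  nra. Qed.

Lemma enorm_triangle n (x y : Rn n) : enorm (fun i => x i + y i) <= enorm x + enorm y.
Proof. induction n.
  - unfold enorm; simpl. rewrite sqrt_0. lra.
  - rewrite !enorm_S. specialize (IHn (rtl x) (rtl y)).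
    assert (E : rtl (fun i => x i + y i) = (fun i => rtl x i + rtl y i)) by reflexivity. rewrite E.
    eapply Rle_trans; [| apply minkowski2; apply enorm_nonneg].
    apply sqrt_le_1_alt. pose proof (enorm_nonneg _ (fun i => rtl x i + rtl y i)). nra. Qed.

Lemma enorm_scale n c (x : Rn n) : enorm (fun i => c * x i) = Rabs c * enorm x.
Proof. unfold enorm. rewrite (sumF_ext _ _ (fun i => c ^ 2 * x i ^ 2)) by (intros; ring).
  rewrite sumF_scale, sqrt_mult_alt by nra. rewrite <- (pow2_abs c), sqrt_pow2 by apply Rabs_pos. auto. Qed.

Lemma edist_sym n (x y : Rn n) : edist x y = edist y x.
Proof. unfold edist. rewrite (enorm_ext _ (fun i => y i - x i) (fun i => (-1) * (x i - y i))) by (intros; ring).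
  rewrite enorm_scale. rewrite (Rabs_left (-1)) by lra. ring. Qed.

Lemma edist_tri n (x y z : Rn n) : edist x z <= edist x y + edist y z.
Proof. unfold edist. rewrite (enorm_ext _ _ (fun i => (x i - y i) + (y i - z i))) by (intros; ring).
  apply enorm_triangle. Qed.

Lemma edist_refl n (x : Rn n) : edist x x = 0.
Proof. unfold edist. rewrite (enorm_ext _ _ (fun _ => 0)) by (intros; ring). apply enorm_0. Qed.

Lemma edist_nonneg n (x y : Rn n) : 0 <= edist x y.
Proof. apply enorm_nonneg. Qed.

Lemma edist_coord n (x y : Rn n) i : Rabs (x i - y i) <= edist x y.
Proof. apply (coord_le _ (fun i => x i - y i)). Qed.

Lemma edist_ext n (x x' y y' : Rn n) : (forall i, x i = x' i) -> (forall i, y i = y' i) -> edist x y = edist x' y'.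
Proof. intros H1 H2; unfold edist; apply enorm_ext; intros; rewrite H1, H2; auto. Qed.

Lemma ball_open n (x : Rn n) r : is_open (ball x r).
Proof. intros y Hy. exists (r - edist x y). split. unfold ball in Hy; lra.
  intros z Hz. unfold ball in *. pose proof (edist_tri _ x y z). lra. Qed.

Lemma edist0_eq n (x y : Rn n) : edist x y = 0 -> x = y.
Proof. intros H. apply functional_extensionality; intros i. pose proof (edist_coord _ x y i).
  pose proof (Rabs_pos (x i - y i)). assert (Rabs (x i - y i) = 0) by lra.
  destruct (Req_dec (x i) (y i)); auto. assert (x i - y i <> 0) by lra. apply Rabs_no_R0 in H4. lra. Qed.

Definition Box {n : nat} (lo hi z : Rn n) : Prop := forall i, lo i <= z i <= hi i.

Lemma list_min {J : Type} (l : list J) (f : J -> R) :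
  (forall j, In j l -> 0 < f j) -> exists e, 0 < e /\ forall j, In j l -> e <= f j.
Proof. induction l as [|a l IH]; intros H.
  - exists 1; split; [lra| intros j []].
  - destruct IH as [e [He H2]]. intros j Hj; apply H; right; auto.
    exists (Rmin (f a) e). split. apply Rmin_glb_lt; auto. apply H; left; auto.
    intros j [<-|Hj]. apply Rmin_l. eapply Rle_trans; [apply Rmin_r| auto]. Qed.

Lemma compact_closed n (K : Rn n -> Prop) x : rn_compact K -> rn_closure K x -> K x.
Proof. intros HK Hc. destruct (classic (K x)) as [|Hn]; auto. exfalso.
  destruct (HK {r : R | 0 < r} (fun r y => proj1_sig r < edist x y)) as [l Hl].
  - intros [r Hr] y Hy. simpl in Hy. exists (edist x y - r). split; [lra|].
    intros z Hz. unfold ball in Hz. simpl. pose proof (edist_tri _ x z y). rewrite (edist_sym _ z y) in H. lra.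
  - intros y Hy. assert (0 < edist x y).
    { destruct (Rle_lt_or_eq_dec _ _ (edist_nonneg _ x y)); auto. symmetry in e; apply edist0_eq in e.
      subst; contradiction. }
    assert (0 < edist x y / 2) by lra. exists (exist _ _ H0). simpl. lra.
  - destruct (list_min l (@proj1_sig _ _)) as [e [He Hle]]. intros [r Hr] _; auto.
    destruct (Hc e He) as [y [Hy Hd]]. destruct (Hl y Hy) as [i [Hi Hv]].
    specialize (Hle i Hi). lra. Qed.

Lemma compact_union_list {J : Type} n (l : list J) (P : J -> Rn n -> Prop) :
  (forall j, In j l -> rn_compact (P j)) -> rn_compact (fun x => exists j, In j l /\ P j x).
Proof. induction l as [|a l IH]; intros H I V HV Hcov.
  - exists nil. intros x [j [[] _]].
  - destruct (H a (or_introl eq_refl) I V HV) as [l1 H1].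
    { intros x Hx. apply Hcov. exists a; split; auto. left; auto. }
    destruct (IH (fun j Hj => H j (or_intror Hj)) I V HV) as [l2 H2].
    { intros x [j [Hj Hx]]. apply Hcov. exists j; split; auto. right; auto. }
    exists (l1 ++ l2). intros x [j [[<-|Hj] Hx]].
    + destruct (H1 x Hx) as [i [Hi Hv]]. exists i; split; auto. apply in_or_app; auto.
    + destruct (H2 x (ex_intro _ j (conj Hj Hx))) as [i [Hi Hv]]. exists i; split; auto. apply in_or_app; auto.
Qed.

Lemma compact_image n (c : Rn n) R L (G : Rn n -> Rn n) (lo hi : Rn n) :
  0 < L -> bilip_on L G (ball c R) ->
  (forall z, Box lo hi z -> exists y, ball c R y /\ forall i, G y i = z i) ->
  rn_compact (Box lo hi) -> rn_compact (fun y => ball c R y /\ Box lo hi (G y)).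
Proof. intros HL HG Hsur HB I V HV Hcov.
  destruct (HB I (fun i z => exists rho, 0 < rho /\ forall y, ball c R y -> edist z (G y) < rho -> V i y)) as [l Hl].
  - intros i z [rho [Hr H]]. exists (rho/2). split; [lra|]. intros z' Hz'.
    exists (rho/2). split; [lra|]. intros y Hy Hd. apply H; auto. unfold ball in Hz'.
    pose proof (edist_tri _ z z' (G y)). lra.
  - intros z Hz. destruct (Hsur z Hz) as [y [Hy Hyz]].
    assert (Hb : Box lo hi (G y)) by (intros j; rewrite Hyz; apply Hz).
    destruct (Hcov y (conj Hy Hb)) as [i Hi]. destruct (HV i y Hi) as [s [Hs Hbs]].
    exists i, (L*s). split. nra. intros y' Hy' Hd. apply Hbs. unfold ball.
    destruct (HG y y' Hy Hy') as [H1 _].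
    rewrite (edist_ext _ z (G y) (G y') (G y')) in Hd by (intros; auto).
    nra.
  - exists l. intros y [Hy Hb]. destruct (Hl (G y) Hb) as [i [Hin [rho [Hr H]]]].
    exists i; split; auto. apply H; auto. rewrite edist_refl; lra.
Qed.

Definition rcons {k : nat} (t : R) (y : Rn k) : Rn (S k) := fun i => Fin.caseS' i (fun _ => R) t y.

Lemma edist_rcons_le k t (y : Rn k) (x : Rn (S k)) : edist (rcons t y) x <= Rabs (t - x Fin.F1) + edist y (rtl x).
Proof. unfold edist at 1. rewrite enorm_S. eapply Rle_trans; [apply sqrt2_le|].
  rewrite (Rabs_right (enorm _)) by (apply Rle_ge, enorm_nonneg). right. f_equal. Qed.

Lemma edist_rcons_same k t (y y' : Rn k) : edist (rcons t y) (rcons t y') = edist y y'.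
Proof. unfold edist at 1. rewrite enorm_S. simpl. replace ((t - t) * ((t - t) * 1)) with 0 by ring.
  rewrite Rplus_0_l. apply sqrt_pow2. apply enorm_nonneg. Qed.

Lemma box_S k (lo hi x : Rn (S k)) : Box lo hi x <-> (lo Fin.F1 <= x Fin.F1 <= hi Fin.F1 /\ Box (rtl lo) (rtl hi) (rtl x)).
Proof. split. intros H; split; [apply H| intros i; apply H].
  intros [H1 H2] i. pattern i; apply Fin.caseS'; auto. Qed.

Lemma box_compact n (lo hi : Rn n) : rn_compact (Box lo hi).
Proof. revert lo hi; induction n; intros lo hi I V HV Hcov.
  - set (x0 := (fun _ => 0) : Rn 0).
    destruct (Hcov x0) as [i Hi]. intros j; exact (Fin.case0 (fun j => lo j <= x0 j <= hi j) j).
    destruct (HV i x0 Hi) as [r [Hr Hb]]. exists (i :: nil). intros y _. exists i. split; [left; auto|].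
    apply Hb. unfold ball, edist, enorm; simpl. rewrite sqrt_0; lra.
  - set (lo1 := lo Fin.F1). set (hi1 := hi Fin.F1).
    assert (Key : forall t, lo1 <= t <= hi1 -> exists rho L, 0 < rho /\ forall x, Rabs (x Fin.F1 - t) < rho ->
       Box (rtl lo) (rtl hi) (rtl x) -> exists i, In i L /\ V i x).
    { intros t Ht.
      destruct (IHn (rtl lo) (rtl hi) I (fun i y => V i (rcons t y))) as [L HL].
      - intros i y Hy. destruct (HV i _ Hy) as [s [Hs Hb]]. exists s; split; auto.
        intros y' Hy'. apply Hb. unfold ball. rewrite edist_rcons_same. auto.
      - intros y Hy. apply Hcov. apply box_S. split; auto.
      - set (W := fun x => exists i, In i L /\ V i x).
        destruct (IHn (rtl lo) (rtl hi) {p : Rn n * R | 0 < snd p /\ forall x, ball (rcons t (fst p)) (2 * snd p) x -> W x}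
             (fun p => ball (fst (proj1_sig p)) (snd (proj1_sig p)))) as [L2 HL2].
        + intros p. apply ball_open.
        + intros y Hy. destruct (HL y Hy) as [i [Hi Hv]]. destruct (HV i _ Hv) as [s [Hs Hb]].
          assert (Hp : 0 < snd (y, s/2) /\ forall x, ball (rcons t (fst (y, s/2))) (2 * snd (y, s/2)) x -> W x).
          { simpl. split. lra. intros x Hx. exists i; split; auto. apply Hb. unfold ball in *. lra. }
          exists (exist (fun p : Rn n * R => 0 < snd p /\ forall x, ball (rcons t (fst p)) (2 * snd p) x -> W x) (y, s/2) Hp). simpl. unfold ball. rewrite edist_refl. lra.
        + destruct (list_min L2 (fun p => snd (proj1_sig p))) as [e [He Hle]].
          { intros [p [Hp Hq]] _; simpl; auto. }
          exists e, L. split; auto. intros x Hx Hb.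
          destruct (HL2 (rtl x) Hb) as [[p [Hp HW]] [Hin Hpx]]. simpl in Hpx.
          apply HW. unfold ball. specialize (Hle _ Hin). simpl in Hle.
          pose proof (edist_rcons_le _ t (fst p) x). rewrite Rabs_minus_sym in Hx. unfold ball in Hpx. lra. }
    assert (Ch : forall t, exists q : R * list I, lo1 <= t <= hi1 -> 0 < fst q /\ forall x, Rabs (x Fin.F1 - t) < fst q ->
       Box (rtl lo) (rtl hi) (rtl x) -> exists i, In i (snd q) /\ V i x).
    { intros t. destruct (classic (lo1 <= t <= hi1)) as [Ht|Ht].
      - destruct (Key t Ht) as [rho [L [Hr HL]]]. exists (rho, L). intros _; simpl; auto.
      - exists (1, nil). intros; contradiction. }
    set (g := fun t => proj1_sig (constructive_indefinite_description _ (Ch t))).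
    assert (Hg : forall t, lo1 <= t <= hi1 -> 0 < fst (g t) /\ forall x, Rabs (x Fin.F1 - t) < fst (g t) ->
       Box (rtl lo) (rtl hi) (rtl x) -> exists i, In i (snd (g t)) /\ V i x).
    { intros t. unfold g. destruct (constructive_indefinite_description _ (Ch t)). simpl. auto. }
    assert (Hcf : forall t, (exists s, lo1 <= t <= hi1 /\ Rabs (s - t) < fst (g t)) -> lo1 <= t <= hi1).
    { intros t [s [H _]]; auto. }
    set (fam := mkfamily (fun t => lo1 <= t <= hi1) (fun t s => lo1 <= t <= hi1 /\ Rabs (s - t) < fst (g t)) Hcf).
    destruct (compact_P3 lo1 hi1 fam) as [D [Hcov2 [lts Hlts]]].
    + split.
      * intros s Hs. exists s. simpl. split; auto. rewrite Rminus_diag, Rabs_R0. apply Hg; auto.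
      * intros t s [Ht Hs]. assert (Hp : 0 < fst (g t) - Rabs (s - t)) by lra.
        exists (mkposreal _ Hp). intros y Hy. unfold disc in Hy; simpl in Hy. simpl. split; auto.
        pose proof (Rabs_triang (y - s) (s - t)). replace (y - s + (s - t)) with (y - t) in H by ring. lra.
    + exists (flat_map (fun t => snd (g t)) lts). intros x Hx. apply box_S in Hx. destruct Hx as [H1 H2].
      destruct (Hcov2 (x Fin.F1) H1) as [t [[Ht Hd] HD]].
      assert (Hin : In t lts) by (apply Hlts; split; auto).
      destruct (proj2 (Hg t Ht) x Hd H2) as [i [Hi Hv]]. exists i. split; auto.
      apply in_flat_map. exists t; auto.
Qed.

Definition ind1 {m : nat} (i : Fin.t (S m)) : R := match i with Fin.F1 => 0 | Fin.FS _ => 1 end.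

Definition Amap {m} (s u : Rn (S m)) : Rn (S m) := fun i => s i * u i - ind1 i * s Fin.F1 * u Fin.F1.
Definition Bmap {m} (s z : Rn (S m)) : Rn (S m) := fun i => s i * (z i + ind1 i * z Fin.F1).

Lemma enorm_ind1 m : enorm (@ind1 m) <= INR m.
Proof. eapply Rle_trans; [apply enorm_le_sum|]. simpl sumF. rewrite Rabs_R0.
  rewrite (sumF_ext _ _ (fun _ => 1)) by (intros; simpl; apply Rabs_R1). rewrite sumF_const. lra. Qed.

Lemma enorm_sgn m (s u : Rn m) : (forall i, s i * s i = 1) -> enorm (fun i => s i * u i) = enorm u.
Proof. intros Hs. unfold enorm. f_equal. apply sumF_ext. intros i. specialize (Hs i). simpl. nra. Qed.

Lemma Rabs_sgn (a b : R) : a * a = 1 -> Rabs (a * b) = Rabs b.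
Proof. intros H. rewrite Rabs_mult. assert (Rabs a = 1).
  { destruct (Rle_dec 0 a). rewrite Rabs_right by lra. nra. rewrite Rabs_left by lra. nra. }
  rewrite H0; ring. Qed.

Lemma coord1_le m (z : Rn (S m)) : Rabs (z Fin.F1) <= enorm z.
Proof. apply coord_le. Qed.

Lemma Amap_bound m (s u : Rn (S m)) : (forall i, s i * s i = 1) -> enorm (Amap s u) <= (1 + INR m) * enorm u.
Proof. intros Hs. unfold Amap.
  rewrite (enorm_ext _ _ (fun i => (fun i => s i * u i) i + (fun i => (- (s Fin.F1 * u Fin.F1)) * ind1 i) i)) by (intros; simpl; ring).
  eapply Rle_trans; [apply enorm_triangle|]. rewrite enorm_sgn by auto. rewrite enorm_scale, Rabs_Ropp, Rabs_sgn by auto.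
  pose proof (coord1_le _ u). pose proof (enorm_ind1 m). pose proof (Rabs_pos (u Fin.F1)). pose proof (pos_INR m).
  assert (Rabs (u Fin.F1) * enorm (@ind1 m) <= enorm u * INR m) by (apply Rmult_le_compat; auto; apply enorm_nonneg).
  nra. Qed.

Lemma Bmap_bound m (s z : Rn (S m)) : (forall i, s i * s i = 1) -> enorm (Bmap s z) <= (1 + INR m) * enorm z.
Proof. intros Hs. unfold Bmap.
  rewrite (enorm_ext _ _ (fun i => (fun i => s i * z i) i + (fun i => z Fin.F1 * (s i * ind1 i)) i)) by (intros; simpl; ring).
  eapply Rle_trans; [apply enorm_triangle|]. rewrite enorm_sgn by auto. rewrite enorm_scale.
  rewrite (enorm_sgn _ s (@ind1 m)) by auto.
  pose proof (coord1_le _ z). pose proof (enorm_ind1 m). pose proof (Rabs_pos (z Fin.F1)). pose proof (pos_INR m).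
  assert (Rabs (z Fin.F1) * enorm (@ind1 m) <= enorm z * INR m) by (apply Rmult_le_compat; auto; apply enorm_nonneg).
  nra. Qed.

Lemma AB m (s z : Rn (S m)) : (forall i, s i * s i = 1) -> forall i, Amap s (Bmap s z) i = z i.
Proof. intros Hs i. unfold Amap, Bmap. simpl. pose proof (Hs i). pose proof (Hs Fin.F1).
  replace (s i * (s i * (z i + ind1 i * z Fin.F1))) with ((s i * s i) * (z i + ind1 i * z Fin.F1)) by ring.
  replace (ind1 i * s Fin.F1 * (s Fin.F1 * (z Fin.F1 + 0 * z Fin.F1))) with (ind1 i * (s Fin.F1 * s Fin.F1) * z Fin.F1) by ring.
  rewrite H, H0. ring. Qed.

Lemma BA m (s u : Rn (S m)) : (forall i, s i * s i = 1) -> forall i, Bmap s (Amap s u) i = u i.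
Proof. intros Hs i. unfold Amap, Bmap. simpl. pose proof (Hs i). pose proof (Hs Fin.F1).
  replace (s i * (s i * u i - ind1 i * s Fin.F1 * u Fin.F1 + ind1 i * (s Fin.F1 * u Fin.F1 - 0 * s Fin.F1 * u Fin.F1)))
   with ((s i * s i) * u i) by ring. rewrite H. ring. Qed.

Lemma Amap_lin m (s u v : Rn (S m)) i : Amap s u i - Amap s v i = Amap s (fun j => u j - v j) i.
Proof. unfold Amap. ring. Qed.

Record PD (m : nat) := mkPD { pc : Rn (S m); pR : R; pL : R; pG : Rn (S m) -> Rn (S m);
  plo : Rn (S m); phi : Rn (S m); pdel : R; pO : Rn (S m) -> Prop }.
Arguments pc {m}. Arguments pR {m}. Arguments pL {m}. Arguments pG {m}.
Arguments plo {m}. Arguments phi {m}. Arguments pdel {m}. Arguments pO {m}.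

Definition piece {m} (d : PD m) (y : Rn (S m)) : Prop := ball (pc d) (pR d) y /\ Box (plo d) (phi d) (pG d y).

Definition valid {m} (K U : Rn (S m) -> Prop) (d : PD m) : Prop :=
 0 < pR d /\ 0 < pL d /\ 0 < pdel d /\ bilip_on (pL d) (pG d) (ball (pc d) (pR d)) /\
 (forall z, Box (plo d) (phi d) z -> exists y, ball (pc d) (pR d / 2) y /\ forall i, pG d y i = z i) /\
 (forall i, pdel d <= phi d i - plo d i) /\
 (forall y, piece d y -> U y) /\ is_open (pO d) /\ (forall y, K y -> pO d y -> piece d y).

Lemma piece_cone m K U (d : PD m) x0 r eps :
 valid K U d -> piece d x0 -> 0 < r -> r <= pR d / 2 -> 0 < eps -> eps <= 1 -> 4 * eps <= pdel d ->
 eps * (1 + INR m) <= pL d -> eps * (4 * (1 + INR m)) <= r * pL d ->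
 exists F : Rn (S m) -> Rn (S m), (forall i, F x0 i = 0) /\ bilip_on eps F (ball x0 r) /\
   forall z, cone eps z -> exists y, piece d y /\ ball x0 r y /\ forall i, F y i = z i.
Proof.
  intros [HR [HL [Hdel [HG [Hsur [Hwid [HU [HO HKO]]]]]]]] [Hx0c Hx0b] Hr Hr2 He He1 He2 He3 He4.
  set (c := pc d) in *. set (R := pR d) in *. set (L := pL d) in *. set (G := pG d) in *.
  set (lo := plo d) in *. set (hi := phi d) in *. set (del := pdel d) in *.
  pose proof (pos_INR m) as Hm. remember (1 + INR m) as k eqn:Hkdef. assert (Hk : 0 < k) by lra.
  assert (Hx0 : edist c x0 < R / 2).
  { destruct (Hsur _ Hx0b) as [y1 [Hy1 Hy1e]].
    assert (Hy1R : ball c R y1) by (unfold ball in *; lra).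
    destruct (HG y1 x0 Hy1R Hx0c) as [H1 _].
    rewrite (edist_ext _ (G y1) (G x0) (G x0) (G x0)) in H1 by (intros; auto). rewrite edist_refl in H1.
    pose proof (edist_nonneg _ y1 x0). assert (edist y1 x0 = 0) by nra.
    pose proof (edist_tri _ c y1 x0). unfold ball in Hy1. lra. }
  assert (Hsub : forall y, ball x0 r y -> ball c R y).
  { intros y Hy. unfold ball in *. pose proof (edist_tri _ c x0 y). lra. }
  set (w := G x0).
  set (s := fun i => if Rle_dec (w i) ((lo i + hi i) / 2) then 1 else -1).
  assert (Hs : forall i, s i * s i = 1). { intros i; unfold s; destruct Rle_dec; ring. }
  exists (fun y => Amap s (fun i => G y i - w i)). split; [|split].
  - intros i. unfold Amap, w. ring.
  - intros y y' Hy Hy'. destruct (HG y y' (Hsub y Hy) (Hsub y' Hy')) as [H1 H2].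
    fold G in H1, H2.
    set (u := fun i => G y i - G y' i).
    assert (E : edist (Amap s (fun i => G y i - w i)) (Amap s (fun i => G y' i - w i)) = enorm (Amap s u)).
    { unfold edist. apply enorm_ext. intros i. rewrite Amap_lin. unfold Amap, u. ring. }
    rewrite E. assert (Eu : enorm u = edist (G y) (G y')) by reflexivity.
    pose proof (Amap_bound _ s u Hs). pose proof (Bmap_bound _ s (Amap s u) Hs). rewrite <- Hkdef in H, H0.
    rewrite (enorm_ext _ (Bmap s (Amap s u)) u) in H0 by (apply BA; auto).
    pose proof (edist_nonneg _ y y'). pose proof (enorm_nonneg _ (Amap s u)).
    set (D := edist y y') in *. set (A := enorm (Amap s u)) in *. rewrite Eu in *.
    set (Eg := edist (G y) (G y')) in *.
    split.
    + apply (Rmult_le_reg_r k); auto. assert (eps * k * D <= L * D) by (apply Rmult_le_compat_r; lra). nra.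
    + assert (eps * A <= D).
      { assert (L * Eg <= D). { replace D with (L * (/ L * D)) by (field; lra). apply Rmult_le_compat_l; lra. }
        nra. }
      replace (/ eps * D) with (/ eps * D) by auto. apply (Rmult_le_reg_l eps); auto.
      replace (eps * (/ eps * D)) with D by (field; lra). auto.
  - intros z [Hz1 Hz2].
    pose proof (enorm_nonneg _ (fun i : Fin.t m => z (Fin.FS i))).
    assert (Hz1p : 0 < z Fin.F1) by nra. assert (Hz1e : z Fin.F1 < eps) by nra.
    set (z2 := fun i => w i + Bmap s z i).
    assert (Hb : Box lo hi z2).
    { intros i. pose proof (Hx0b i) as Hw. fold lo hi G w in Hw. pose proof (Hwid i) as Hwi. fold del lo hi in Hwi.
      unfold z2, Bmap, s. revert Hw Hwi. pattern i; apply Fin.caseS'.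
      - simpl. intros Hw Hwi. destruct Rle_dec; lra.
      - intros j Hw Hwi. simpl. pose proof (coord_le _ (fun i : Fin.t m => z (Fin.FS i)) j). simpl in H0.
        pose proof (Rle_abs (z (Fin.FS j))).
        pose proof (Rle_abs (- z (Fin.FS j))). rewrite Rabs_Ropp in H2.
        destruct Rle_dec; nra. }
    destruct (Hsur z2 Hb) as [y [Hy Hye]]. fold G in Hye.
    assert (HyR : ball c R y) by (unfold ball in *; lra).
    exists y. split; [|split].
    + split; auto. intros i. rewrite Hye. apply Hb.
    + destruct (HG x0 y Hx0c HyR) as [H1 _]. fold G in H1.
      rewrite (edist_ext _ (G x0) w (G y) z2) in H1 by (intros; auto).
      assert (E : edist w z2 = enorm (Bmap s z)).
      { unfold edist, z2. rewrite (enorm_ext _ _ (fun i => (-1) * Bmap s z i)) by (intros; ring).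
        rewrite enorm_scale. rewrite (Rabs_left (-1)) by lra. ring. }
      rewrite E in H1. pose proof (Bmap_bound _ s z Hs) as HBz. rewrite <- Hkdef in HBz.
      assert (Hzn : enorm z <= z Fin.F1 + eps * z Fin.F1).
      { rewrite enorm_S. eapply Rle_trans; [apply sqrt2_le|]. rewrite Rabs_right by lra.
        rewrite Rabs_right by (apply Rle_ge, enorm_nonneg). unfold rtl. lra. }
      unfold ball.
      assert (L * edist x0 y < L * r).
      { assert (enorm z < 2 * eps) by nra. nra. }
      nra.
    + intros i. rewrite <- (AB _ s z Hs i). unfold Amap. rewrite !Hye. unfold z2. ring.
Qed.

Lemma ind1_bounds m (i : Fin.t (S m)) : 0 <= ind1 i <= 1.
Proof. pattern i; apply Fin.caseS'; simpl; intros; lra. Qed.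

Lemma box_sum_bound n (a z : Rn n) del : (forall i, Rabs (a i - z i) <= del) -> edist a z <= INR n * del.
Proof. intros H. eapply Rle_trans; [apply enorm_le_sum|]. rewrite <- sumF_const. apply sumF_le. auto. Qed.

Lemma piece_interior m (K U Omega V : Rn (S m) -> Prop) x :
  is_open Omega -> is_open V -> (forall y, U y <-> V y /\ rn_closure Omega y) -> V x -> Omega x ->
  exists d : PD m, valid K U d /\ pO d x.
Proof. intros HO HV HUV Vx Ox.
  destruct (HV x Vx) as [rV [HrV HbV]]. destruct (HO x Ox) as [rO [HrO HbO]].
  set (rho := Rmin rV rO). assert (Hrho : 0 < rho) by (apply Rmin_glb_lt; auto).
  pose proof (pos_INR (S m)) as Hn. assert (Hn' : 0 < INR (S m)) by (rewrite S_INR; pose proof (pos_INR m); lra).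
  set (del := rho / (4 * INR (S m))). assert (Hdel : 0 < del) by (unfold del; apply Rdiv_lt_0_compat; lra).
  assert (Hnd : INR (S m) * del = rho / 4) by (unfold del; field; lra).
  exists (mkPD m x rho 1 (fun y => y) (fun i => x i - del) (fun i => x i + del) del (ball x del)).
  split; [|unfold ball; simpl; rewrite edist_refl; auto].
  unfold valid; simpl. split; [auto|]. split; [lra|]. split; [auto|]. split; [|split; [|split; [|split; [|split]]]].
  - intros y y' _ _. rewrite Rinv_1. lra.
  - intros z Hz. exists z. split; auto. unfold ball.
    assert (edist x z <= INR (S m) * del). { apply box_sum_bound. intros i. specialize (Hz i). simpl in Hz. apply Rabs_le. lra. }
    lra.
  - intros i. lra.
  - intros y [Hy _]. simpl in Hy. apply HUV. unfold ball in Hy. split.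
    + apply HbV. unfold ball. pose proof (Rmin_l rV rO). fold rho in H. lra.
    + intros e He. exists y. split. apply HbO. unfold ball. pose proof (Rmin_r rV rO). fold rho in H. lra.
      rewrite edist_refl; auto.
  - apply ball_open.
  - intros y _ Hy. unfold ball in Hy. split; simpl.
    + unfold ball. assert (INR (S m) >= 1) by (rewrite S_INR; pose proof (pos_INR m); lra).
      assert (del < rho) by nra. lra.
    + intros i. pose proof (edist_coord _ x y i). pose proof (Rle_abs (x i - y i)).
      pose proof (Rle_abs (- (x i - y i))). rewrite Rabs_Ropp in H1. lra.
Qed.

Lemma enorm_e1 m : enorm (fun i : Fin.t (S m) => 1 - ind1 i) = 1.
Proof. rewrite enorm_S. simpl. rewrite (enorm_ext _ (rtl _) (fun _ => 0)) by (intros; unfold rtl; simpl; ring).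
  rewrite enorm_0. transitivity (sqrt 1). f_equal; ring. apply sqrt_1. Qed.

Lemma bilip_up n L (G : Rn n -> Rn n) D a b : 0 < L -> bilip_on L G D -> D a -> D b ->
  L * edist (G a) (G b) <= edist a b.
Proof. intros HL H Ha Hb. destruct (H a b Ha Hb) as [_ H2].
  replace (edist a b) with (L * (/ L * edist a b)) by (field; lra). apply Rmult_le_compat_l; lra. Qed.

Lemma piece_boundary m (K U Omega V : Rn (S m) -> Prop) x :
  bilip_halfspace_domain Omega -> (forall y, K y -> rn_closure Omega y) ->
  is_open V -> (forall y, U y <-> V y /\ rn_closure Omega y) -> V x -> K x -> ~ Omega x ->
  exists d : PD m, valid K U d /\ pO d x.
Proof. intros Hlip HKM HV HUV Vx Kx NOx.
  destruct (Hlip x) as [rp [Lp [Phi [Hrp [HLp [HPhi0 [Hbil [Himg Hiff]]]]]]]].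
  { split. apply HKM; auto. intros e He. exists x. split; auto. rewrite edist_refl; auto. }
  assert (Hxx : ball x rp x) by (unfold ball; rewrite edist_refl; auto).
  destruct (Himg (Phi x)) as [tau [Htau Hbt]]. { exists x. split; auto. }
  destruct (HV x Vx) as [rV [HrV HbV]].
  set (tau' := Rmin tau (Lp * rp / 2)). assert (Htau' : 0 < tau') by (apply Rmin_glb_lt; nra).
  set (mu := Rmin tau' (Lp * rV)). assert (Hmu : 0 < mu) by (apply Rmin_glb_lt; nra).
  pose proof (Rmin_l tau (Lp * rp / 2)) as Hm1. pose proof (Rmin_r tau (Lp * rp / 2)) as Hm2.
  pose proof (Rmin_l tau' (Lp * rV)) as Hm3. pose proof (Rmin_r tau' (Lp * rV)) as Hm4. fold tau' mu in Hm1, Hm2, Hm3, Hm4.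
  assert (Hn' : 0 < INR (S m)) by (rewrite S_INR; pose proof (pos_INR m); lra).
  set (del := mu / (2 * INR (S m))). assert (Hdel : 0 < del) by (unfold del; apply Rdiv_lt_0_compat; lra).
  assert (Hnd : INR (S m) * del = mu / 2) by (unfold del; field; lra).
  set (rO := Rmin (Lp * del) rp). assert (HrO : 0 < rO) by (apply Rmin_glb_lt; nra).
  pose proof (Rmin_l (Lp * del) rp) as Hm5. pose proof (Rmin_r (Lp * del) rp) as Hm6. fold rO in Hm5, Hm6.
  set (lo := fun i : Fin.t (S m) => - del * ind1 i). set (hi := fun _ : Fin.t (S m) => del).
  assert (Hboxd : forall z, Box lo hi z -> edist (Phi x) z <= mu / 2).
  { intros z Hz. rewrite <- Hnd. apply box_sum_bound. intros i. rewrite HPhi0. specialize (Hz i). unfold lo, hi in Hz.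
    pose proof (ind1_bounds m i). apply Rabs_le. nra. }
  exists (mkPD m x rp Lp Phi lo hi del (ball x rO)).
  split; [|unfold ball; simpl; rewrite edist_refl; auto].
  unfold valid; simpl. split; [auto|]. split; [auto|]. split; [auto|]. split; [auto|].
  split; [|split; [|split; [|split]]].
  - intros z Hz. destruct (Hbt z) as [y [Hy Hyz]]. { unfold ball. pose proof (Hboxd z Hz). lra. }
    exists y. split; auto. unfold ball.
    destruct (Hbil x y Hxx Hy) as [H1 _]. rewrite (edist_ext _ (Phi x) (Phi x) (Phi y) z) in H1 by auto.
    pose proof (Hboxd z Hz). assert (Lp * edist x y < Lp * (rp / 2)) by lra.
    apply Rmult_lt_reg_l in H0; auto.
  - intros i. unfold lo, hi. pose proof (ind1_bounds m i). nra.
  - intros y [Hy Hb]. simpl in Hb. apply HUV. split.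
    + apply HbV. unfold ball. destruct (Hbil x y Hxx Hy) as [H1 _]. pose proof (Hboxd _ Hb).
      assert (Lp * edist x y < Lp * rV) by lra. apply Rmult_lt_reg_l in H0; auto.
    + intros e He.
      destruct (Himg (Phi y)) as [ty [Hty Hbty]]. { exists y. split; auto. }
      set (t := Rmin (ty / 2) (Lp * e / 2)). assert (Ht : 0 < t) by (apply Rmin_glb_lt; nra).
      pose proof (Rmin_l (ty / 2) (Lp * e / 2)) as Ht1. pose proof (Rmin_r (ty / 2) (Lp * e / 2)) as Ht2. fold t in Ht1, Ht2.
      set (z' := fun i => Phi y i + t * (1 - ind1 i)).
      assert (Ed : edist (Phi y) z' = t).
      { unfold edist, z'. rewrite (enorm_ext _ _ (fun i => (- t) * (1 - ind1 i))) by (intros; ring).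
        rewrite enorm_scale, enorm_e1, Rabs_Ropp, Rabs_right by lra. ring. }
      destruct (Hbty z') as [y' [Hy' Hyz']]. { unfold ball. lra. }
      exists y'. split.
      * apply Hiff; auto. rewrite Hyz'. unfold z'. simpl. specialize (Hb Fin.F1). unfold lo in Hb. simpl in Hb. lra.
      * destruct (Hbil y y' Hy Hy') as [H _].
        rewrite (edist_ext _ (Phi y) (Phi y) (Phi y') z') in H by auto. rewrite Ed in H.
        assert (Lp * edist y y' < Lp * e) by lra. apply Rmult_lt_reg_l in H0; auto.
  - apply ball_open.
  - intros y Ky Hy. unfold ball in Hy. assert (HyR : ball x rp y) by (unfold ball; lra). split; auto.
    pose proof (bilip_up _ _ _ _ x y HLp Hbil Hxx HyR) as Hxy.
    assert (Hc : forall i, Rabs (Phi y i) < del).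
    { intros i. pose proof (edist_coord _ (Phi x) (Phi y) i). rewrite HPhi0 in H.
      replace (0 - Phi y i) with (- Phi y i) in H by ring. rewrite Rabs_Ropp in H.
      assert (Lp * edist (Phi x) (Phi y) < Lp * del) by lra. apply Rmult_lt_reg_l in H0; auto. lra. }
    intros i. unfold lo, hi. pattern i; apply Fin.caseS'.
    + simpl. split; [|pose proof (Rle_abs (Phi y Fin.F1)); specialize (Hc Fin.F1); lra].
      destruct (Rle_dec 0 (Phi y Fin.F1)) as [Hp|Hp]; [lra|exfalso].
      set (a := - Phi y Fin.F1). assert (Ha : 0 < a) by (unfold a; lra).
      set (rr := Rmin (rp - edist x y) (Lp * a)). assert (Hrr : 0 < rr) by (apply Rmin_glb_lt; nra).
      destruct (HKM y Ky rr Hrr) as [y' [Oy' Hyy']].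
      pose proof (Rmin_l (rp - edist x y) (Lp * a)). pose proof (Rmin_r (rp - edist x y) (Lp * a)). fold rr in H, H0.
      assert (Hy'R : ball x rp y') by (unfold ball; pose proof (edist_tri _ x y y'); lra).
      apply (Hiff y' Hy'R) in Oy'.
      pose proof (bilip_up _ _ _ _ y y' HLp Hbil HyR Hy'R).
      pose proof (edist_coord _ (Phi y) (Phi y') Fin.F1). pose proof (Rle_abs (Phi y Fin.F1 - Phi y' Fin.F1)).
      pose proof (Rabs_pos (Phi y Fin.F1 - Phi y' Fin.F1)).
      assert (Lp * edist (Phi y) (Phi y') < Lp * a) by lra. apply Rmult_lt_reg_l in H5; auto.
      unfold a in H5. pose proof (Rle_abs (- (Phi y Fin.F1 - Phi y' Fin.F1))). rewrite Rabs_Ropp in H6. lra.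
    + intros j. simpl. specialize (Hc (Fin.FS j)). pose proof (Rle_abs (Phi y (Fin.FS j))).
      pose proof (Rle_abs (- Phi y (Fin.FS j))). rewrite Rabs_Ropp in H0. lra.
Qed.

Lemma le_div_mul a b k : 0 < k -> a <= b / k -> a * k <= b.
Proof. intros Hk H. apply (Rmult_le_compat_r k) in H; [|lra]. replace (b / k * k) with b in H by (field; lra). auto. Qed.

Theorem lemma6p2 (m : nat) (Omega : Rn (S m) -> Prop)
  (HOmega_open : is_open Omega)
  (HOmega_bdd : rn_bounded Omega)
  (HOmega_conn : rn_connected Omega)
  (HOmega_ne : exists x, Omega x)
  (HOmega_lip : bilip_halfspace_domain Omega)
  (K U : Rn (S m) -> Prop)
  (HK : rn_compact K) (HKM : rn_subset K (rn_closure Omega))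
  (HU : rel_open (rn_closure Omega) U) (HKU : rn_subset K U) :
  exists K' : Rn (S m) -> Prop,
    rn_compact K' /\ rn_subset K K' /\ rn_subset K' U /\ bilip_cone_condition K'.
Proof.
  destruct HU as [V [HVo HUV]].
  assert (Hpc : forall x, K x -> exists d : PD m, valid K U d /\ pO d x).
  { intros x Kx. assert (Vx : V x) by (apply HUV, HKU; auto).
    destruct (classic (Omega x)) as [Ox|NOx].
    - apply (piece_interior m K U Omega V x); auto.
    - apply (piece_boundary m K U Omega V x); auto. }
  destruct (HK {d : PD m | valid K U d} (fun d => pO (proj1_sig d))) as [l Hl].
  { intros [d Hd]. simpl. apply Hd. }
  { intros x Hx. destruct (Hpc x Hx) as [d [Hd Hx']]. exists (exist _ d Hd). auto. }
  set (K' := fun y => exists d, In d l /\ piece (proj1_sig d) y).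
  assert (HK' : rn_compact K').
  { apply compact_union_list. intros [d Hd] _. simpl.
    destruct Hd as [HR [HL [Hdel [HG [Hsur _]]]]].
    apply (compact_image _ (pc d) (pR d) (pL d) (pG d) (plo d) (phi d)); auto.
    - intros z Hz. destruct (Hsur z Hz) as [y [Hy Hyz]]. exists y; split; auto. unfold ball in *; lra.
    - apply box_compact. }
  exists K'. split; [auto|]. split; [|split].
  - intros x Hx. destruct (Hl x Hx) as [d [Hin Hd]]. exists d. split; auto.
    destruct d as [d Hv]. simpl in *. apply Hv; auto.
  - intros y [[d Hv] [_ Hp]]. simpl in Hp. apply Hv. auto.
  - destruct (list_min l (fun d => pR (proj1_sig d) / 2)) as [r [Hr Hrle]].
    { intros [d Hv] _. simpl. destruct Hv; lra. }
    pose proof (pos_INR m) as Hm. assert (Hk : 0 < 1 + INR m) by lra.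
    destruct (list_min l (fun d => Rmin 1 (Rmin (pdel (proj1_sig d) / 4) (Rmin (pL (proj1_sig d) / (1 + INR m))
         (r * pL (proj1_sig d) / (4 * (1 + INR m))))))) as [eps [He Hele]].
    { intros [d Hv] _. simpl. destruct Hv as [HR [HL [Hdel _]]].
      repeat apply Rmin_glb_lt; try lra; apply Rdiv_lt_0_compat; nra. }
    exists r, eps. split; auto. split; auto. intros x0 [Hcl _].
    apply compact_closed in Hcl; auto. destruct Hcl as [[d Hv] [Hin Hp]]. simpl in Hp.
    specialize (Hrle _ Hin). specialize (Hele _ Hin). simpl in Hrle, Hele.
    pose proof (Rmin_l 1 (Rmin (pdel d / 4) (Rmin (pL d / (1 + INR m)) (r * pL d / (4 * (1 + INR m)))))).
    pose proof (Rmin_r 1 (Rmin (pdel d / 4) (Rmin (pL d / (1 + INR m)) (r * pL d / (4 * (1 + INR m)))))).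
    pose proof (Rmin_l (pdel d / 4) (Rmin (pL d / (1 + INR m)) (r * pL d / (4 * (1 + INR m))))).
    pose proof (Rmin_r (pdel d / 4) (Rmin (pL d / (1 + INR m)) (r * pL d / (4 * (1 + INR m))))).
    pose proof (Rmin_l (pL d / (1 + INR m)) (r * pL d / (4 * (1 + INR m)))).
    pose proof (Rmin_r (pL d / (1 + INR m)) (r * pL d / (4 * (1 + INR m)))).
    destruct (piece_cone m K U d x0 r eps Hv Hp Hr Hrle He) as [F [HF0 [HFb HFc]]].
    + lra.
    + lra.
    + apply le_div_mul; lra.
    + apply le_div_mul; lra.
    + exists F. split; auto. split; auto. intros z Hz. destruct (HFc z Hz) as [y [Hy1 [Hy2 Hy3]]].
      exists y. split; auto. exists (exist _ d Hv). auto.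
Qed.
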